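(* Let $u>v\geq 1$ be integers. Then $$\langle u+v,u+v,u+v\rangle\;\leq\;\langle u,u,u\rangle+3\,\langle u,u,v\rangle+3\,\langle v,v,u\rangle .$$
   Context: Fix a field $\mathbb{K}$. For positive integers $a,b,c$, $\langle a,b,c\rangle$ denotes the minimal number of multiplications of a non-commutative bilinear algorithm computing the product of an $a\times b$ matrix $A$ by a $b\times c$ matrix $B$. Such an algorithm consists of $r$ products $t_k=\big(\sum_{i,j}\alpha^{(k)}_{ij}a_{ij}\big)\big(\sum_{j,l}\beta^{(k)}_{jl}b_{jl}\big)$ with $\alpha^{(k)}_{ij},\beta^{(k)}_{jl}\in\mathbb{K}$, together with scalars $\gamma^{(k)}_{il}\in\mathbb{K}$ such that $(AB)_{il}=\sum_{k=1}^r\gamma^{(k)}_{il}t_k$ for all $i,l$. This identity must hold when the entries of $A$ and $B$ are taken in an arbitrary, not necessarily commutative, associative $\mathbb{K}$-algebra. Equivalently, $\langle a,b,c\rangle$ is the tensor rank of the matrix multiplication tensor of format $(a,b,c)$. *)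

(* Defs.v *)
From mathcomp Require Import all_boot all_order all_algebra.
From mathcomp Require Import boolp.
Set Implicit Arguments. Unset Strict Implicit. Unset Printing Implicit Defensive.
Import GRing.Theory.
Local Open Scope ring_scope.

(* A non-commutative bilinear algorithm with r multiplications for the product
   of an a x b matrix A by a b x c matrix B over K:
     t_k = (sum_{i,j} al k i j * A_{ij}) (sum_{j',l} be k j' l * B_{j'l}),
     (AB)_{i'l'} = sum_k ga k i' l' * t_k.
   Since the entries of A and B lie in an arbitrary (free) non-commutative
   K-algebra, this holds iff, for all indices, the coefficient of the
   (ordered) monomial A_{ij} B_{j'l} in sum_k ga k i' l' * t_k equals that in
   (AB)_{i'l'} = sum_j A_{i'j} B_{jl'}, i.e. [i = i'][j = j'][l = l']. *)
Definition is_mm_alg (K : fieldType) (a b c r : nat)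
  (al : 'I_r -> 'M[K]_(a, b)) (be : 'I_r -> 'M[K]_(b, c))
  (ga : 'I_r -> 'M[K]_(a, c)) : Prop :=
  forall (i : 'I_a) (j j' : 'I_b) (l : 'I_c) (i' : 'I_a) (l' : 'I_c),
    \sum_(k < r) ga k i' l' * (al k i j * be k j' l)
    = ((i == i') && (j == j') && (l == l'))%:R.

Definition mm_alg_exists (K : fieldType) (a b c r : nat) : Prop :=
  exists al be ga, @is_mm_alg K a b c r al be ga.

Lemma mm_alg_exists_trivial (K : fieldType) (a b c : nat) :
  exists r, @mm_alg_exists K a b c r.
Proof.
pose T : finType := ('I_a * 'I_b * 'I_c)%type.
exists #|T|.
pose e (k : 'I_#|T|) : T := enum_val k.
exists (fun k => \matrix_(i, j) (((i == (e k).1.1) && (j == (e k).1.2))%:R : K)).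
exists (fun k => \matrix_(j, l) (((j == (e k).1.2) && (l == (e k).2))%:R : K)).
exists (fun k => \matrix_(i, l) (((i == (e k).1.1) && (l == (e k).2))%:R : K)).
move=> i j j' l i' l'.
have eK t : e (enum_rank t) = t by exact: enum_rankK.
rewrite (reindex (@enum_rank T)) /=; last first.
  by exists (@enum_val T predT) => x _; [exact: enum_rankK | exact: enum_valK].
rewrite (bigD1 (i, j, l)) //= big1 ?addr0.
  rewrite !eK !mxE /= !eqxx /=.
  rewrite mul1r andbT (eq_sym i) (eq_sym j) (eq_sym l).
  by case: (i' == i); case: (j' == j); case: (l' == l); rewrite /= ?(mulr0, mul0r, mulr1).
move=> [[x y] z] /= Hne; rewrite !eK !mxE /=.
case: (i =P x) => [Hx|_]; last by rewrite !(mul0r, mulr0, andbF, andFb).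
case: (j =P y) => [Hy|_]; last by rewrite !(mul0r, mulr0, andbF, andFb).
case: (l =P z) => [Hz|_]; last by rewrite !(mul0r, mulr0, andbF, andFb).
by subst; rewrite eqxx in Hne.
Qed.

Lemma mm_alg_exists_trivialb (K : fieldType) (a b c : nat) :
  exists r, `[< @mm_alg_exists K a b c r >].
Proof.
by have [r Hr] := mm_alg_exists_trivial K a b c; exists r; apply/asboolP.
Qed.

Definition mm_rank (K : fieldType) (a b c : nat) : nat :=
  ex_minn (@mm_alg_exists_trivialb K a b c).

(* Main.v *)
Require Import Defs.
From mathcomp Require Import all_boot all_algebra.
From mathcomp Require Import boolp ring.
Set Implicit Arguments. Unset Strict Implicit. Unset Printing Implicit Defensive.
Import GRing.Theory.
Local Open Scope ring_scope.

Section S.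
Variable K : fieldType.

Definition tens n := 'I_n -> 'I_n -> 'I_n -> 'I_n -> 'I_n -> 'I_n -> K.

Definition has_rank n r (F : tens n) := exists (al be ga : 'I_r -> 'M[K]_n),
  forall i j j' l i' l', \sum_(k < r) ga k i' l' * (al k i j * be k j' l) = F i j j' l i' l'.

Lemma alg_cyc a b c r : mm_alg_exists K a b c r -> mm_alg_exists K c a b r.
Proof.
case=> al [be [ga H]].
exists (fun k => (ga k)^T), (fun k => al k), (fun k => (be k)^T).
move=> i j j' l i' l'.
have -> : ((i == i') && (j == j') && (l == l')) = ((j' == j) && (l == l') && (i' == i)).
  by rewrite (eq_sym i) (eq_sym j); case: (i' == i); case: (j' == j); case: (l == l').
rewrite -H; apply: eq_bigr => k _; rewrite !mxE /=; ring.
Qed.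

Lemma has_rank_add n r1 r2 (F G : tens n) : has_rank r1 F -> has_rank r2 G ->
  has_rank (r1 + r2) (fun i j j' l i' l' => F i j j' l i' l' + G i j j' l i' l').
Proof.
case=> [al1 [be1 [ga1 H1]]] [al2 [be2 [ga2 H2]]].
pose sel (X1 X2 : _ -> 'M[K]_n) (k : 'I_(r1 + r2)) :=
  match split k with inl k1 => X1 k1 | inr k2 => X2 k2 end.
exists (sel al1 al2), (sel be1 be2), (sel ga1 ga2) => i j j' l i' l'.
rewrite big_split_ord -H1 -H2 /sel; congr (_ + _); apply: eq_bigr => k _.
  by rewrite -[lshift _ _]/(unsplit (inl _)) unsplitK.
by rewrite -[rshift _ _]/(unsplit (inr _)) unsplitK.
Qed.

Lemma sum4 (I A B C D : finType) (F : I -> A -> B -> C -> D -> K) :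
  \sum_k \sum_a \sum_b \sum_c \sum_d F k a b c d =
  \sum_a \sum_b \sum_c \sum_d \sum_k F k a b c d.
Proof.
rewrite exchange_big; apply: eq_bigr => a _.
rewrite exchange_big; apply: eq_bigr => b _.
rewrite exchange_big; apply: eq_bigr => c _.
by rewrite exchange_big.
Qed.

Lemma prod22 (A B C D : finType) (f : A -> B -> K) (g : C -> D -> K) :
  (\sum_a \sum_b f a b) * (\sum_c \sum_d g c d) =
  \sum_a \sum_b \sum_c \sum_d f a b * g c d.
Proof.
rewrite big_distrl; apply: eq_bigr => a _.
rewrite big_distrl; apply: eq_bigr => b _.
rewrite big_distrr; apply: eq_bigr => c _.
by rewrite big_distrr.
Qed.

Lemma alg_computes p q t r (al : 'I_r -> 'M[K]_(p, q)) be ga :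
  is_mm_alg al be ga -> forall (X : 'M_(p, q)) (Y : 'M_(q, t)),
  \sum_(k < r) ((\sum_a \sum_b X a b * al k a b) * (\sum_c \sum_d Y c d * be k c d)) *: ga k
  = X *m Y.
Proof.
move=> H X Y; apply/matrixP => p' t'.
rewrite summxE !mxE.
transitivity (\sum_a \sum_b \sum_c \sum_d X a b * Y c d *
   \sum_(k < r) ga k p' t' * (al k a b * be k c d)).
  rewrite [RHS](_ : _ = \sum_a \sum_b \sum_c \sum_d \sum_k
      X a b * Y c d * (ga k p' t' * (al k a b * be k c d))); last first.
    apply: eq_bigr => a _; apply: eq_bigr => b _; apply: eq_bigr => c _.
    by apply: eq_bigr => d _; rewrite big_distrr.
  rewrite -sum4; apply: eq_bigr => k _.
  rewrite mxE mulrC prod22 big_distrr; apply: eq_bigr => a _.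
  rewrite big_distrr; apply: eq_bigr => b _.
  rewrite big_distrr; apply: eq_bigr => c _.
  rewrite big_distrr; apply: eq_bigr => d _.
  rewrite /=; ring.
under eq_bigr => a _ do under eq_bigr => b _ do under eq_bigr => c _ do under eq_bigr => d _ do rewrite H.
rewrite (bigD1 p') //= [X in _ + X]big1 ?addr0; last first.
  move=> a /negbTE Ha; apply: big1 => b _; apply: big1 => c _; apply: big1 => d _.
  by rewrite Ha /= mulr0.
apply: eq_bigr => b _.
rewrite (bigD1 b) //= [X in _ + X]big1 ?addr0; last first.
  move=> c /negbTE Hc; apply: big1 => d _.
  by rewrite eqxx eq_sym Hc /= mulr0.
rewrite (bigD1 t') //= [X in _ + X]big1 ?addr0; last first.
  move=> d /negbTE Hd.
  by rewrite !eqxx Hd /= mulr0.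
by rewrite !eqxx mulr1.
Qed.


Lemma restr n p q t r (P : 'M[K]_n -> 'M_(p, q)) (Q : 'M[K]_n -> 'M_(q, t))
  (R : 'M[K]_(p, t) -> 'M[K]_n) :
  (forall x M N, R (x *: M + N) = x *: R M + R N) -> mm_alg_exists K p q t r ->
  has_rank r (fun i j j' l i' l' => R (P (delta_mx i j) *m Q (delta_mx j' l)) i' l').
Proof.
move=> hR [al [be [ga H]]].
have R0 : R 0 = 0.
  have := hR 1 0 0; rewrite scaler0 addr0 scale1r.
  by move/(congr1 (fun z => z - R 0)); rewrite addrK subrr.
have RD : {morph R : x y / x + y}.
  by move=> x y; have := hR 1 x y; rewrite !scale1r.
have RZ x M : R (x *: M) = x *: R M by rewrite -[x *: M]addr0 hR R0 addr0.
exists (fun k => \matrix_(i, j) \sum_a \sum_b P (delta_mx i j) a b * al k a b).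
exists (fun k => \matrix_(j, l) \sum_c \sum_d Q (delta_mx j l) c d * be k c d).
exists (fun k => R (ga k)) => i j j' l i' l'.
rewrite -(alg_computes H) (big_morph R RD R0) summxE; apply: eq_bigr => k _.
rewrite RZ !mxE /=; ring.
Qed.

Lemma has_rank_mm n r (F : tens n) : has_rank r F ->
  (forall i j j' l i' l', F i j j' l i' l' = ((i == i') && (j == j') && (l == l'))%:R) ->
  mm_alg_exists K n n n r.
Proof.
case=> al [be [ga H]] HF; exists al, be, ga => i j j' l i' l'.
by rewrite H HF.
Qed.


Variables (v w : nat).
Local Notation u := (v + w).
Local Notation M := 'M[K]_(u + v).

Definition P1 (A : M) : 'M[K]_(u, u) := ulsubmx A + block_mx (drsubmx A) 0 0 0.
Definition R1 (X : 'M[K]_(u, u)) : M := block_mx X 0 0 (ulsubmx X).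
Definition P2 (A : M) : 'M[K]_(v, u) := dlsubmx A + row_mx (drsubmx A) 0.
Definition Q2 (B : M) : 'M[K]_(u, u) := ulsubmx B.
Definition R2 (X : 'M[K]_(v, u)) : M := block_mx 0 0 X (- lsubmx X).
Definition P3 (A : M) : 'M[K]_(u, u) := ulsubmx A.
Definition Q3 (B : M) : 'M[K]_(u, v) := ursubmx B - col_mx (drsubmx B) 0.
Definition R3 (X : 'M[K]_(u, v)) : M := block_mx 0 X 0 (usubmx X).
Definition P4 (A : M) : 'M[K]_(v, v) := drsubmx A.
Definition Q4 (B : M) : 'M[K]_(v, u) := dlsubmx B - usubmx (ulsubmx B).
Definition R4 (X : 'M[K]_(v, u)) : M := block_mx (col_mx X 0) 0 X 0.
Definition P5 (A : M) : 'M[K]_(u, v) := lsubmx (ulsubmx A) + ursubmx A.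
Definition Q5 (B : M) : 'M[K]_(v, v) := drsubmx B.
Definition R5 (X : 'M[K]_(u, v)) : M := block_mx (- row_mx X 0) X 0 0.
Definition P6 (A : M) : 'M[K]_(v, u) := dlsubmx A - usubmx (ulsubmx A).
Definition Q6 (B : M) : 'M[K]_(u, v) := lsubmx (ulsubmx B) + ursubmx B.
Definition R6 (X : 'M[K]_(v, v)) : M := block_mx 0 0 0 X.
Definition P7 (A : M) : 'M[K]_(u, v) := ursubmx A - col_mx (drsubmx A) 0.
Definition Q7 (B : M) : 'M[K]_(v, u) := dlsubmx B + row_mx (drsubmx B) 0.
Definition R7 (X : 'M[K]_(u, u)) : M := block_mx X 0 0 0.

Lemma lsub_block m1 m2 n1 n2 (a : 'M[K]_(m1, n1)) (b : 'M[K]_(m1, n2)) c (d : 'M[K]_(m2, n2)) :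
  lsubmx (block_mx a b c d) = col_mx a c.
Proof. by rewrite block_mxEh row_mxKl. Qed.
Lemma usub_block m1 m2 n1 n2 (a : 'M[K]_(m1, n1)) (b : 'M[K]_(m1, n2)) c (d : 'M[K]_(m2, n2)) :
  usubmx (block_mx a b c d) = row_mx a b.
Proof. by rewrite block_mxEv col_mxKu. Qed.
Lemma rowcol0 m1 m2 n1 n2 (p : 'M[K]_(m1, n1)) (q : 'M[K]_(m2, n1)) :
  row_mx (col_mx p q) (0 : 'M_(m1 + m2, n2)) = block_mx p 0 q 0.
Proof. by rewrite -col_mx0 block_mxEh. Qed.
Lemma colrow0 m1 m2 n1 n2 (p : 'M[K]_(m1, n1)) (q : 'M[K]_(m1, n2)) :
  col_mx (row_mx p q) (0 : 'M_(m2, n1 + n2)) = block_mx p q 0 0.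
Proof. by rewrite -row_mx0 block_mxEv. Qed.
Lemma colrow m1 m2 n1 n2 (a : 'M[K]_(m1, n1)) (b : 'M[K]_(m1, n2)) c (d : 'M[K]_(m2, n2)) :
  col_mx (row_mx a b) (row_mx c d) = block_mx a b c d.
Proof. by rewrite block_mxEv. Qed.

Lemma key_blocks a11 a12 a21 a22 a13 a23 a31 a32 (a33 : 'M[K]_v)
                 b11 b12 b21 b22 b13 b23 b31 b32 (b33 : 'M[K]_v) :
  let A : M := block_mx (block_mx a11 a12 a21 a22) (col_mx a13 a23) (row_mx a31 a32) a33 in
  let B : M := block_mx (block_mx b11 b12 b21 b22) (col_mx b13 b23) (row_mx b31 b32) b33 in
  R1 (P1 A *m P1 B) + R2 (P2 A *m Q2 B) + R3 (P3 A *m Q3 B) + R4 (P4 A *m Q4 B)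
  + R5 (P5 A *m Q5 B) + R6 (P6 A *m Q6 B) + R7 (P7 A *m Q7 B) = A *m B.
Proof.
move=> A B.
rewrite /R1 /P1 /R2 /P2 /Q2 /R3 /P3 /Q3 /R4 /P4 /Q4 /R5 /P5 /Q5 /R6 /P6 /Q6 /R7 /P7 /Q7 /A /B.
rewrite !(block_mxKul, block_mxKur, block_mxKdl, block_mxKdr, row_mxKl, row_mxKr, col_mxKu, col_mxKd).
rewrite !(add_block_mx, add_row_mx, add_col_mx, opp_block_mx, opp_row_mx, opp_col_mx, addr0, add0r, oppr0, subr0, sub0r).
rewrite !(mulmx_block, mul_row_block, mul_block_col, mul_row_col, mul_col_row, mul_mx_row, mul_col_mx).
rewrite !(block_mxKul, block_mxKur, block_mxKdl, block_mxKdr, row_mxKl, row_mxKr, col_mxKu, col_mxKd).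
rewrite !(add_block_mx, add_row_mx, add_col_mx, opp_block_mx, opp_row_mx, opp_col_mx, addr0, add0r, oppr0, subr0, sub0r).
rewrite !(lsub_block, usub_block, add_block_mx, add_row_mx, add_col_mx, opp_block_mx, opp_row_mx, opp_col_mx, addr0, add0r, oppr0, subr0, sub0r).
rewrite !(mulmx_block, mul_row_block, mul_block_col, mul_row_col, mul_col_row, mul_mx_row, mul_col_mx).
rewrite !(rowcol0, colrow0, colrow).
rewrite !(add_block_mx, add_row_mx, add_col_mx, opp_block_mx, opp_row_mx, opp_col_mx, addr0, add0r, oppr0, subr0, sub0r).
rewrite !(rowcol0, colrow0, colrow).
rewrite !(add_block_mx, add_row_mx, add_col_mx, opp_block_mx, opp_row_mx, opp_col_mx, addr0, add0r, oppr0, subr0, sub0r).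
rewrite !(mulmxDl, mulmxDr, mulmxBl, mulmxBr, mulNmx, mulmxN, opprD, opprK).
congr (block_mx (block_mx _ _ _ _) (col_mx _ _) (row_mx _ _) _);
  apply/matrixP => i j; rewrite !mxE /=; ring.
Qed.

Lemma key (A B : M) :
  R1 (P1 A *m P1 B) + R2 (P2 A *m Q2 B) + R3 (P3 A *m Q3 B) + R4 (P4 A *m Q4 B)
  + R5 (P5 A *m Q5 B) + R6 (P6 A *m Q6 B) + R7 (P7 A *m Q7 B) = A *m B.
Proof.
have eA : A = block_mx (block_mx (ulsubmx (ulsubmx A)) (ursubmx (ulsubmx A))
   (dlsubmx (ulsubmx A)) (drsubmx (ulsubmx A))) (col_mx (usubmx (ursubmx A)) (dsubmx (ursubmx A)))
   (row_mx (lsubmx (dlsubmx A)) (rsubmx (dlsubmx A))) (drsubmx A).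
  by rewrite submxK vsubmxK hsubmxK submxK.
have eB : B = block_mx (block_mx (ulsubmx (ulsubmx B)) (ursubmx (ulsubmx B))
   (dlsubmx (ulsubmx B)) (drsubmx (ulsubmx B))) (col_mx (usubmx (ursubmx B)) (dsubmx (ursubmx B)))
   (row_mx (lsubmx (dlsubmx B)) (rsubmx (dlsubmx B))) (drsubmx B).
  by rewrite submxK vsubmxK hsubmxK submxK.
have := key_blocks (ulsubmx (ulsubmx A)) (ursubmx (ulsubmx A))
   (dlsubmx (ulsubmx A)) (drsubmx (ulsubmx A)) (usubmx (ursubmx A)) (dsubmx (ursubmx A))
   (lsubmx (dlsubmx A)) (rsubmx (dlsubmx A)) (drsubmx A)
   (ulsubmx (ulsubmx B)) (ursubmx (ulsubmx B))
   (dlsubmx (ulsubmx B)) (drsubmx (ulsubmx B)) (usubmx (ursubmx B)) (dsubmx (ursubmx B))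
   (lsubmx (dlsubmx B)) (rsubmx (dlsubmx B)) (drsubmx B).
by rewrite /= -eA -eB.
Qed.

Lemma linUL m1 m2 n1 n2 x (X Y : 'M[K]_(m1 + m2, n1 + n2)) :
  ulsubmx (x *: X + Y) = x *: ulsubmx X + ulsubmx Y.
Proof. by apply/matrixP => i j; rewrite !mxE. Qed.
Lemma linL m n1 n2 x (X Y : 'M[K]_(m, n1 + n2)) :
  lsubmx (x *: X + Y) = x *: lsubmx X + lsubmx Y.
Proof. by apply/matrixP => i j; rewrite !mxE. Qed.
Lemma linU m1 m2 n x (X Y : 'M[K]_(m1 + m2, n)) :
  usubmx (x *: X + Y) = x *: usubmx X + usubmx Y.
Proof. by apply/matrixP => i j; rewrite !mxE. Qed.

Ltac linR := rewrite ?scale_block_mx ?add_block_mx ?scale_col_mx ?scale_row_mx ?add_col_mx ?add_row_mx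
   ?linUL ?linL ?linU ?scaler0 ?addr0 ?scalerN ?opprD.

Lemma linR1 x X Y : R1 (x *: X + Y) = x *: R1 X + R1 Y.
Proof. rewrite /R1; linR. done. Qed.
Lemma linR2 x X Y : R2 (x *: X + Y) = x *: R2 X + R2 Y.
Proof. rewrite /R2; linR. done. Qed.
Lemma linR3 x X Y : R3 (x *: X + Y) = x *: R3 X + R3 Y.
Proof. rewrite /R3; linR. done. Qed.
Lemma linR4 x X Y : R4 (x *: X + Y) = x *: R4 X + R4 Y.
Proof. rewrite /R4; linR. done. Qed.
Lemma linR5 x X Y : R5 (x *: X + Y) = x *: R5 X + R5 Y.
Proof. rewrite /R5 !opp_row_mx oppr0; linR. done. Qed.
Lemma linR6 x X Y : R6 (x *: X + Y) = x *: R6 X + R6 Y.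
Proof. rewrite /R6; linR. done. Qed.
Lemma linR7 x X Y : R7 (x *: X + Y) = x *: R7 X + R7 Y.
Proof. rewrite /R7; linR. done. Qed.

End S.

Lemma rank_spec (K : fieldType) a b c :
  mm_alg_exists K a b c (mm_rank K a b c) /\
  forall r, mm_alg_exists K a b c r -> (mm_rank K a b c <= r)%N.
Proof.
rewrite /mm_rank; case: ex_minnP => m /asboolP Hm Hmin; split => // r Hr.
by apply: Hmin; apply/asboolP.
Qed.

Lemma addmxE' (K : fieldType) m n (A B : 'M[K]_(m, n)) i j : (A + B) i j = A i j + B i j.
Proof. by rewrite mxE. Qed.

Theorem proposition1 (K : fieldType) (u v : nat) :
  (1 <= v)%N -> (v < u)%N ->
  (mm_rank K (u + v) (u + v) (u + v)
   <= mm_rank K u u u + 3 * mm_rank K u u v + 3 * mm_rank K v v u)%N.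
Proof.
move=> hv huv.
have -> : u = (v + (u - v))%N by rewrite subnKC // ltnW.
move: (u - v)%N => w.
have [hU _] := rank_spec K (v + w) (v + w) (v + w).
have [hUV _] := rank_spec K (v + w) (v + w) v.
have [hVU _] := rank_spec K v v (v + w).
have [_ hmin] := rank_spec K (v + w + v) (v + w + v) (v + w + v).
set rU := mm_rank K (v + w) (v + w) (v + w) in hU *.
set rUV := mm_rank K (v + w) (v + w) v in hUV *.
set rVU := mm_rank K v v (v + w) in hVU *.
have h1 := restr (@P1 K v w) (@P1 K v w) (@linR1 K v w) hU.
have h2 := restr (@P2 K v w) (@Q2 K v w) (@linR2 K v w) (alg_cyc hUV).
have h3 := restr (@P3 K v w) (@Q3 K v w) (@linR3 K v w) hUV.
have h4 := restr (@P4 K v w) (@Q4 K v w) (@linR4 K v w) hVU.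
have h5 := restr (@P5 K v w) (@Q5 K v w) (@linR5 K v w) (alg_cyc hVU).
have h6 := restr (@P6 K v w) (@Q6 K v w) (@linR6 K v w) (alg_cyc (alg_cyc hVU)).
have h7 := restr (@P7 K v w) (@Q7 K v w) (@linR7 K v w) (alg_cyc (alg_cyc hUV)).
have h := has_rank_add (has_rank_add (has_rank_add (has_rank_add (has_rank_add
   (has_rank_add h1 h2) h3) h4) h5) h6) h7.
have := hmin _ (has_rank_mm h _).
have -> : (rU + rUV + rUV + rVU + rVU + rVU + rUV = rU + 3 * rUV + 3 * rVU)%N.
  by rewrite !mulSn mul0n !addn0 -!addnA; congr (_ + _); rewrite !addnA addnC !addnA; congr (_ + _ + _);
     rewrite addnC !addnA.
apply.
move=> i j j' l i' l' /=.
rewrite -!addmxE' key mul_delta_mx_cond.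
case E: (j == j'); rewrite /= ?andbF ?andbT.
  by rewrite mulr1n mxE (eq_sym i) (eq_sym l).
by rewrite mulr0n mxE.
Qed.
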